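(* Let $\mathbb X=\ell^\infty(\mathbb C)$, the real Banach space of bounded complex sequences $(x_k)_{k\in\mathbb N}$ with the supremum norm. For $t\in[0,1]$ define $g_t((x_k))=(t\,x_k e^{i\pi/(2k)})$ and $f_t((x_k))=(\tfrac t4x_k+1-\tfrac t4)$, and let $F^g_t=\{f_t,g_t\}$. For $t\in[0,1)$ both maps are contractions, so $F^g_t$ has a unique attractor $A_t$ (nonempty compact with $A_t=f_t(A_t)\cup g_t(A_t)$). Then there is no sequence $t_n\in[0,1)$ with $t_n\to1$ such that $(A_{t_n})$ converges in the Hausdorff metric; in particular $F^g_t$ has no upper transition attractor. More precisely, for every $s\in[\tfrac12,1)$ there is $t_0<1$ such that $h(A_t,A_s)\ge\tfrac12$ for all $t\in[t_0,1)$.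
   Context: $h$ denotes the Hausdorff metric on nonempty compact subsets of $\mathbb X$. An upper transition attractor of $F^g_t$ is a compact set $A^\bullet$ for which there is an increasing sequence $t_n\in[0,1)$, $t_n\to1$, with $h(A_{t_n},A^\bullet)\to0$. *)

(* Defs.v *)
From Stdlib Require Import Reals List.
From Coquelicot Require Import Coquelicot.
Open Scope R_scope.

(* Sequences of complex numbers; index k : nat stands for the paper's k+1
   (the paper indexes by k = 1, 2, ...). *)
Definition seqC := nat -> C.

Definition bounded_seq (x : seqC) : Prop := exists M : R, forall k, Cmod (x k) <= M.

(* sup-norm distance, extended-real valued (+oo between a bounded and an
   unbounded sequence); on l^oo it is the usual finite sup metric. *)
Definition linf_dist (x y : seqC) : Rbar :=
  Sup_seq (fun k => Finite (Cmod (Cminus (x k) (y k)))).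

Definition linf_open (U : seqC -> Prop) : Prop :=
  forall x, U x -> exists eps : R, 0 < eps /\
    forall y, Rbar_lt (linf_dist x y) (Finite eps) -> U y.

Definition linf_compact (K : seqC -> Prop) : Prop :=
  forall (I : Type) (U : I -> seqC -> Prop),
    (forall i, linf_open (U i)) ->
    (forall x, K x -> exists i, U i x) ->
    exists l : list I, forall x, K x -> exists i, In i l /\ U i x.

Definition nonempty_compact (K : seqC -> Prop) : Prop :=
  (exists x, K x) /\ (forall x, K x -> bounded_seq x) /\ linf_compact K.

Definition dist_to_set (x : seqC) (B : seqC -> Prop) : Rbar :=
  Glb_Rbar (fun r => exists b, B b /\ linf_dist x b = Finite r).

Definition excess (A B : seqC -> Prop) : Rbar :=
  Lub_Rbar (fun r => exists a, A a /\ dist_to_set a B = Finite r).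

Definition hausdorff (A B : seqC -> Prop) : R :=
  Rmax (real (excess A B)) (real (excess B A)).

Definition cis (theta : R) : C := (cos theta, sin theta).

Definition g_map (t : R) (x : seqC) : seqC :=
  fun k => Cmult (Cmult (RtoC t) (x k)) (cis (PI / (2 * INR (S k)))).

Definition f_map (t : R) (x : seqC) : seqC :=
  fun k => Cplus (Cmult (RtoC (t / 4)) (x k)) (RtoC (1 - t / 4)).

Definition is_attractor (t : R) (A : seqC -> Prop) : Prop :=
  nonempty_compact A /\
  forall x, A x <-> ((exists y, A y /\ x = f_map t y) \/ (exists y, A y /\ x = g_map t y)).

Definition upper_transition_attractor (A : R -> seqC -> Prop) (Ab : seqC -> Prop) : Prop :=
  nonempty_compact Ab /\
  exists tn : nat -> R,
    (forall n, 0 <= tn n < 1) /\ (forall n, tn n < tn (S n)) /\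
    is_lim_seq tn 1 /\ is_lim_seq (fun n => hausdorff (A (tn n)) Ab) 0.

(* Main.v *)
Require Import Defs.
From Stdlib Require Import Reals Lra Classical List.
From Coquelicot Require Import Coquelicot.
Open Scope R_scope.

Lemma sup_le (u : nat -> R) r : (forall n, u n <= r) ->
  Rbar_le (Sup_seq (fun n => Finite (u n))) (Finite r).
Proof.
  intros H. generalize (Sup_seq_correct (fun n => Finite (u n))).
  destruct (Sup_seq (fun n => Finite (u n))) as [l| |]; simpl; intros Hs.
  - apply Rnot_lt_le; intro Hlt.
    assert (He : 0 < l - r) by lra.
    destruct (Hs (mkposreal _ He)) as [_ [n Hn]]. simpl in Hn.
    specialize (H n). lra.
  - destruct (Hs r) as [n Hn]. simpl in Hn. specialize (H n). lra.
  - exact I.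
Qed.

Lemma dist_ge x y k : Rbar_le (Finite (Cmod (Cminus (x k) (y k)))) (linf_dist x y).
Proof.
  unfold linf_dist. apply Sup_seq_minor_le with k. apply Rbar_le_refl.
Qed.

Lemma dist_ge' x y k r : linf_dist x y = Finite r -> Cmod (Cminus (x k) (y k)) <= r.
Proof. intros H. generalize (dist_ge x y k). rewrite H. simpl. auto. Qed.

Lemma dist_fin x y r : (forall k, Cmod (Cminus (x k) (y k)) <= r) ->
  exists d, linf_dist x y = Finite d /\ 0 <= d /\ d <= r.
Proof.
  intros H. assert (Hu : Rbar_le (linf_dist x y) (Finite r)) by (apply sup_le; auto).
  generalize (dist_ge x y 0). destruct (linf_dist x y) as [d| |]; simpl in *; intros Hl; try tauto.
  exists d. split; auto. split; auto. apply Rle_trans with (2 := Hl). apply Cmod_ge_0.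
Qed.

Lemma Cminus_split a b c : Cminus a c = Cplus (Cminus a b) (Cminus b c).
Proof. destruct a, b, c. unfold Cminus, Cplus, Copp. simpl. f_equal; ring. Qed.

Lemma Cmod_tri3 a b c : Cmod (Cminus a c) <= Cmod (Cminus a b) + Cmod (Cminus b c).
Proof. rewrite (Cminus_split a b c). apply Cmod_triangle. Qed.

Lemma Cmod_minus_le a b : Cmod (Cminus a b) <= Cmod a + Cmod b.
Proof.
  unfold Cminus. eapply Rle_trans. apply Cmod_triangle. rewrite Cmod_opp. lra.
Qed.

Lemma Cmod_le_split a b : Cmod b <= Cmod a + Cmod (Cminus a b).
Proof.
  replace b with (Cminus a (Cminus a b)) at 1.
  - apply Cmod_minus_le.
  - destruct a, b. unfold Cminus, Cplus, Copp. simpl. f_equal; ring.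
Qed.

Lemma Cminus_self a : Cminus a a = RtoC 0.
Proof. destruct a. unfold Cminus, Cplus, Copp, RtoC. simpl. f_equal; ring. Qed.

Lemma snd_le_Cmod z : Rabs (snd z) <= Cmod z.
Proof. eapply Rle_trans. 2: apply Rmax_Cmod. apply Rmax_r. Qed.
Lemma fst_le_Cmod z : Rabs (fst z) <= Cmod z.
Proof. eapply Rle_trans. 2: apply Rmax_Cmod. apply Rmax_l. Qed.

Lemma snd_minus a b : snd (Cminus a b) = snd a - snd b.
Proof. destruct a, b. unfold Cminus, Cplus, Copp. simpl. ring. Qed.

Definition bnd (K : seqC -> Prop) (M : R) := forall x, K x -> forall k, Cmod (x k) <= M.

Lemma list_bnd (K : seqC -> Prop) (l : list seqC) : (forall x, K x -> bounded_seq x) ->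
  exists M, forall c, In c l -> K c -> forall k, Cmod (c k) <= M.
Proof.
  intros Hb. induction l as [|c l IH].
  - exists 0. intros c [].
  - destruct IH as [M HM].
    destruct (classic (K c)) as [Kc|nKc].
    + destruct (Hb c Kc) as [M1 HM1]. exists (Rmax M M1).
      intros c' [<-|Hin] Kc' k.
      * eapply Rle_trans. apply HM1. apply Rmax_r.
      * eapply Rle_trans. apply HM; auto. apply Rmax_l.
    + exists M. intros c' [<-|Hin] Kc' k. contradiction. apply HM; auto.
Qed.

Lemma compact_bnd K : nonempty_compact K -> exists M, bnd K M.
Proof.
  intros [_ [Hb Hc]].
  set (U := fun (c y : seqC) => K c /\ exists r, r < 1 /\ forall k, Cmod (Cminus (c k) (y k)) <= r).
  destruct (Hc seqC U) as [l Hl].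
  - intros c y [Kc [r [Hr Hk]]]. exists ((1-r)/2). split. lra.
    intros z Hz. split; auto. exists (r + (1-r)/2). split. lra. intros k.
    eapply Rle_trans. apply (Cmod_tri3 _ (y k)).
    generalize (Rbar_le_lt_trans _ _ _ (dist_ge y z k) Hz). simpl. intros H1.
    specialize (Hk k). lra.
  - intros x Kx. exists x. split; auto. exists 0. split. lra. intros k.
    rewrite Cminus_self, Cmod_R, Rabs_R0. lra.
  - destruct (list_bnd K l Hb) as [M HM]. exists (M + 1).
    intros x Kx k. destruct (Hl x Kx) as [c [Hin [Kc [r [Hr Hk]]]]].
    eapply Rle_trans. apply (Cmod_le_split (c k)).
    specialize (HM c Hin Kc k). specialize (Hk k). lra.
Qed.
Lemma lim_arg s M v c : 0 <= s < 1 -> 0 <= M -> (forall n, v <= c + s ^ n * M) -> v <= c.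
Proof.
  intros Hs HM H. apply Rnot_lt_le; intro Hlt.
  assert (Hd : 0 < (v - c) / (M + 1)) by (apply Rdiv_lt_0_compat; lra).
  assert (Ha : Rabs s < 1) by (rewrite Rabs_pos_eq; lra).
  destruct (pow_lt_1_zero s Ha _ Hd) as [N HN].
  specialize (HN N (Nat.le_refl N)). rewrite Rabs_pos_eq in HN by (apply pow_le; lra).
  specialize (H N). assert (Hp : 0 <= s ^ N) by (apply pow_le; lra).
  assert (s ^ N * (M + 1) < v - c).
  { apply Rmult_lt_reg_r with (/ (M+1)). apply Rinv_0_lt_compat; lra.
    rewrite Rmult_assoc, Rinv_r by lra. rewrite Rmult_1_r. exact HN. }
  nra.
Qed.

Lemma f_mod t y k : 0 <= t <= 1 -> Cmod (f_map t y k) <= t / 4 * Cmod (y k) + (1 - t / 4).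
Proof.
  intros Ht. unfold f_map. eapply Rle_trans. apply Cmod_triangle.
  rewrite Cmod_mult, !Cmod_R, !Rabs_pos_eq by lra. lra.
Qed.

Lemma Cmod_cis th : Cmod (cis th) = 1.
Proof.
  unfold cis, Cmod. simpl.
  replace (cos th * (cos th * 1) + sin th * (sin th * 1)) with 1.
  apply sqrt_1. generalize (sin2_cos2 th). unfold Rsqr. intros H. nra.
Qed.

Lemma g_mod t y k : 0 <= t -> Cmod (g_map t y k) = t * Cmod (y k).
Proof.
  intros Ht. unfold g_map. rewrite !Cmod_mult, Cmod_cis, Cmod_R, Rabs_pos_eq by lra. ring.
Qed.

Lemma attr_ne t A : is_attractor t A -> exists x, A x.
Proof. intros [[H _] _]. exact H. Qed.

Lemma attr_bnd t A : 0 <= t < 1 -> is_attractor t A -> bnd A 1.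
Proof.
  intros Ht [Hne Hinv]. destruct (compact_bnd _ Hne) as [M HM].
  assert (Hn : forall n x, A x -> forall k, Cmod (x k) <= 1 + t ^ n * Rabs M).
  { induction n as [|n IH]; intros x Ax k.
    - simpl. specialize (HM x Ax k). generalize (Rle_abs M). lra.
    - assert (Hp : 0 <= t ^ n * Rabs M) by (apply Rmult_le_pos; [apply pow_le; lra | apply Rabs_pos]).
      simpl.
      destruct (proj1 (Hinv x) Ax) as [[y [Ay ->]]|[y [Ay ->]]].
      + eapply Rle_trans. apply f_mod. lra. specialize (IH y Ay k). nra.
      + rewrite g_mod by lra. specialize (IH y Ay k). nra. }
  intros x Ax k. apply (lim_arg t (Rabs M)). exact Ht. apply Rabs_pos.
  intros n. apply Hn; auto.
Qed.

Definition theta (k : nat) := PI / (2 * INR (S k)).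

Lemma theta_pos k : 0 < theta k <= PI.
Proof.
  unfold theta. generalize PI_RGT_0. intros HP.
  assert (H1 : 1 <= INR (S k)) by (rewrite S_INR; generalize (pos_INR k); lra).
  split. apply Rdiv_lt_0_compat; lra.
  apply Rmult_le_reg_r with (2 * INR (S k)). lra.
  unfold Rdiv. rewrite Rmult_assoc, Rinv_l by lra. nra.
Qed.

Lemma attr_im s A k : 0 <= s < 1 -> is_attractor s A ->
  forall x, A x -> Rabs (snd (x k)) <= sin (theta k) / (1 - s).
Proof.
  intros Hs HA. pose proof (attr_bnd s A Hs HA) as Hb. destruct HA as [Hne Hinv].
  set (c := sin (theta k) / (1 - s)).
  assert (Hsin : 0 <= sin (theta k)) by (apply sin_ge_0; generalize (theta_pos k); lra).
  assert (Hc : c * (1 - s) = sin (theta k)) by (unfold c; field; lra).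
  assert (Hc0 : 0 <= c) by (unfold c; apply Rmult_le_pos; auto; left; apply Rinv_0_lt_compat; lra).
  assert (Hn : forall n x, A x -> Rabs (snd (x k)) <= c + s ^ n * 1).
  { induction n as [|n IH]; intros x Ax.
    - simpl. generalize (snd_le_Cmod (x k)) (Hb x Ax k). lra.
    - assert (Hp : 0 <= s ^ n) by (apply pow_le; lra). simpl.
      destruct (proj1 (Hinv x) Ax) as [[y [Ay ->]]|[y [Ay ->]]].
      + specialize (IH y Ay). unfold f_map. destruct (y k) as [a b]. unfold Cmult, Cplus, RtoC. simpl.
        simpl in IH.
        replace (s / 4 * b + 0 * a + 0) with (s / 4 * b) by ring.
        rewrite Rabs_mult, (Rabs_pos_eq (s/4)) by lra. nra.
      + specialize (IH y Ay). generalize (fst_le_Cmod (y k)) (Hb y Ay k). intro Ha.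
        unfold g_map, cis. change (PI / (2 * INR (S k))) with (theta k).
        destruct (y k) as [a b]. unfold Cmult, RtoC. simpl. simpl in IH, Ha.
        intros H1.
        replace ((s * a - 0 * b) * sin (theta k) + (s * b + 0 * a) * cos (theta k))
          with (s * (a * sin (theta k)) + s * (b * cos (theta k))) by ring.
        eapply Rle_trans. apply Rabs_triang.
        rewrite !Rabs_mult, !(Rabs_pos_eq s) by lra.
        rewrite (Rabs_pos_eq (sin _)) by lra.
        assert (Hcos : Rabs (cos (theta k)) <= 1) by (apply Rabs_le; apply COS_bound).
        assert (Rabs a <= 1) by lra.
        assert (Rabs a * sin (theta k) <= sin (theta k)) by nra.
        assert (Rabs b * Rabs (cos (theta k)) <= Rabs b) by (generalize (Rabs_pos b) (Rabs_pos (cos (theta k))); nra).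
        nra. }
  intros x Ax. apply (lim_arg s 1). exact Hs. lra. intros n. apply Hn; auto.
Qed.
Fixpoint giter (t : R) (m : nat) (x : seqC) : seqC :=
  match m with O => x | S m => g_map t (giter t m x) end.

Lemma giter_in t A m w : is_attractor t A -> A w -> A (giter t m w).
Proof.
  intros [_ Hinv] Aw. induction m as [|m IH]; simpl; auto.
  apply (proj2 (Hinv _)). right. exists (giter t m w). auto.
Qed.

Lemma giter_k t m w k :
  giter t m w k = (t ^ m * (fst (w k) * cos (INR m * theta k) - snd (w k) * sin (INR m * theta k)),
                   t ^ m * (fst (w k) * sin (INR m * theta k) + snd (w k) * cos (INR m * theta k))).
Proof.
  induction m as [|m IH].
  - simpl. rewrite Rmult_0_l, cos_0, sin_0. destruct (w k). simpl. f_equal; ring.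
  - change (giter t (S m) w k) with (g_map t (giter t m w) k). unfold g_map.
    rewrite IH. unfold Cmult, RtoC, cis. change (PI / (2 * INR (S k))) with (theta k).
    rewrite S_INR, Rmult_plus_distr_r, Rmult_1_l, cos_plus, sin_plus.
    simpl. f_equal; ring.
Qed.

Lemma big_point t A k : 0 <= t < 1 -> is_attractor t A ->
  exists y, A y /\ snd (y k) >= 7/8 * t ^ (S k).
Proof.
  intros Ht HA. pose proof (attr_bnd t A Ht HA) as Hb.
  destruct (attr_ne t A HA) as [a Aa].
  assert (Hf : forall y, A y -> A (f_map t y)).
  { intros y Ay. destruct HA as [_ Hinv]. apply (proj2 (Hinv _)). left. exists y; auto. }
  set (w := f_map t (f_map t a)).
  assert (Aw : A w) by (apply Hf, Hf, Aa).
  assert (Hw : fst (w k) >= 7/8).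
  { generalize (fst_le_Cmod (a k)) (Hb a Aa k). intros H1 H2.
    unfold w, f_map. destruct (a k) as [p q]. unfold Cmult, Cplus, RtoC. simpl. simpl in H1.
    assert (Hp : -1 <= p) by (generalize (Rabs_le_between' p 0 1); intros; apply Rabs_le_between in H1 || idtac;
       apply Rabs_le_between' in H1 || idtac; lra).
    nra. }
  exists (giter t (S k) w). split. apply giter_in; auto.
  clearbody w. rewrite giter_k. cbn [snd].
  replace (INR (S k) * theta k) with (PI / 2).
  2:{ unfold theta. field. generalize (pos_INR k). rewrite S_INR. lra. }
  rewrite cos_PI2, sin_PI2. change (t * t ^ k) with (t ^ S k).
  assert (0 <= t ^ S k) by (apply pow_le; lra). nra.
Qed.

Lemma bernoulli t m : 0 <= t <= 1 -> t ^ m >= 1 - INR m * (1 - t).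
Proof.
  intros Ht. induction m as [|m IH].
  - simpl. lra.
  - rewrite S_INR. simpl. assert (0 <= INR m) by apply pos_INR.
    assert (t * (t ^ m - (1 - INR m * (1 - t))) >= 0) by (apply Rle_ge, Rmult_le_pos; lra).
    assert (INR m * ((1 - t) * (1 - t)) >= 0) by (apply Rle_ge, Rmult_le_pos; nra).
    nra.
Qed.

Lemma choose_k s : 0 <= s < 1 -> exists k, sin (theta k) / (1 - s) <= 1/8.
Proof.
  intros Hs. destruct (INR_unbounded (16 / (1 - s))) as [n Hn].
  exists n. set (X := INR (S n)).
  assert (HX : INR n <= X) by (unfold X; rewrite S_INR; lra).
  assert (H16 : 16 < (1 - s) * X).
  { assert (16 / (1 - s) * (1 - s) = 16) by (field; lra). nra. }
  assert (HX0 : 0 < X) by nra.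
  assert (Hth : theta n * (2 * X) = PI) by (unfold theta; fold X; field; lra).
  generalize (sin_lt_x (theta n) (proj1 (theta_pos n))). intros Hs1.
  generalize PI_4. intros HP.
  assert (theta n <= (1 - s) / 8) by nra.
  apply Rmult_le_reg_r with (1 - s). lra.
  unfold Rdiv. rewrite Rmult_assoc, Rinv_l by lra. lra.
Qed.
Lemma dts_fin x B M MB : (forall k, Cmod (x k) <= M) -> (exists b, B b) -> bnd B MB ->
  exists d, dist_to_set x B = Finite d /\ d <= M + MB /\
    (forall eps, 0 < eps -> exists b r, B b /\ linf_dist x b = Finite r /\ r < d + eps).
Proof.
  intros Hx [b0 Bb0] HB.
  assert (Hd : forall b, B b -> exists r, linf_dist x b = Finite r /\ 0 <= r /\ r <= M + MB).
  { intros b Bb. apply dist_fin. intros k. eapply Rle_trans. apply Cmod_minus_le.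
    generalize (Hx k) (HB b Bb k). lra. }
  unfold dist_to_set.
  set (E := fun r => exists b, B b /\ linf_dist x b = Finite r).
  destruct (Glb_Rbar_correct E) as [Hlb Hgr].
  assert (H0 : Rbar_le (Finite 0) (Glb_Rbar E)).
  { apply Hgr. intros r [b [Bb Hr]]. destruct (Hd b Bb) as [r' [Hr' [H1 _]]].
    rewrite Hr in Hr'. injection Hr' as ->. simpl. auto. }
  destruct (Hd b0 Bb0) as [r0 [Hr0 [_ Hr0M]]].
  assert (H1 : Rbar_le (Glb_Rbar E) (Finite r0)) by (apply Hlb; exists b0; auto).
  destruct (Glb_Rbar E) as [d| |]; simpl in H0, H1; try tauto.
  exists d. split; auto. split. lra.
  intros eps Heps. apply NNPP. intros Hno.
  assert (Hlb' : is_lb_Rbar E (Finite (d + eps))).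
  { intros r [b [Bb Hr]]. simpl. apply Rnot_lt_le. intros Hlt. apply Hno. exists b, r. auto. }
  specialize (Hgr _ Hlb'). simpl in Hgr. lra.
Qed.

Lemma exc_fin A B MA MB : (exists a, A a) -> bnd A MA -> (exists b, B b) -> bnd B MB ->
  exists e, excess A B = Finite e /\
    (forall a d, A a -> dist_to_set a B = Finite d -> d <= e).
Proof.
  intros [a0 Aa0] HA HBne HB. unfold excess.
  set (E := fun r => exists a, A a /\ dist_to_set a B = Finite r).
  destruct (Lub_Rbar_correct E) as [Hub Hle].
  assert (H1 : Rbar_le (Lub_Rbar E) (Finite (MA + MB))).
  { apply Hle. intros r [a [Aa Hr]]. destruct (dts_fin a B MA MB (HA a Aa) HBne HB) as [d [Hd [HdM _]]].
    rewrite Hr in Hd. injection Hd as ->. simpl. auto. }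
  destruct (dts_fin a0 B MA MB (HA a0 Aa0) HBne HB) as [d0 [Hd0 _]].
  assert (H0 : Rbar_le (Finite d0) (Lub_Rbar E)) by (apply Hub; exists a0; auto).
  destruct (Lub_Rbar E) as [e| |]; simpl in H0, H1; try tauto.
  exists e. split; auto. intros a d Aa Hd. generalize (Hub d (ex_intro _ a (conj Aa Hd))). simpl. auto.
Qed.

Lemma far_point (A : seqC -> Prop) k t : is_attractor t A -> 0 <= t < 1 ->
  t >= 1 - 1 / (7 * INR (S k)) ->
  exists y, A y /\ snd (y k) >= 3/4.
Proof.
  intros HA Ht Ht0. destruct (big_point t A k Ht HA) as [y [Ay Hy]]. exists y. split; auto.
  assert (HX : 1 <= INR (S k)) by (rewrite S_INR; generalize (pos_INR k); lra).
  generalize (bernoulli t (S k) ltac:(lra)). intros Hb.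
  assert (INR (S k) * (1 - t) <= 1/7).
  { assert (1 - t <= 1 / (7 * INR (S k))) by lra.
    apply Rle_trans with (INR (S k) * (1 / (7 * INR (S k)))).
    apply Rmult_le_compat_l; lra. right. field. lra. }
  lra.
Qed.
Lemma haus_sym A B : hausdorff A B = hausdorff B A.
Proof. unfold hausdorff. apply Rmax_comm. Qed.

Lemma close_point A B MA MB x eps : (exists a, A a) -> bnd A MA -> (exists b, B b) -> bnd B MB ->
  A x -> hausdorff A B < eps -> exists b, B b /\ forall k, Cmod (Cminus (x k) (b k)) < eps.
Proof.
  intros HAn HA HBn HB Ax Hh.
  destruct (exc_fin A B MA MB HAn HA HBn HB) as [e1 [He1 P1]].
  destruct (exc_fin B A MB MA HBn HB HAn HA) as [e2 [He2 _]].
  unfold hausdorff in Hh. rewrite He1, He2 in Hh. simpl in Hh.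
  generalize (Rmax_l e1 e2). intros Hm.
  destruct (dts_fin x B MA MB (HA x Ax) HBn HB) as [d [Hd [_ Happ]]].
  specialize (P1 x d Ax Hd).
  destruct (Happ (eps - d) ltac:(lra)) as [b [r [Bb [Hr Hrl]]]].
  exists b. split; auto. intros k. generalize (dist_ge' x b k r Hr). lra.
Qed.

Lemma far_haus A B MA MB x c : (exists a, A a) -> bnd A MA -> (exists b, B b) -> bnd B MB ->
  A x -> (forall b, B b -> exists k, Cmod (Cminus (x k) (b k)) >= c) -> hausdorff A B >= c.
Proof.
  intros HAn HA HBn HB Ax Hf.
  destruct (exc_fin A B MA MB HAn HA HBn HB) as [e1 [He1 P1]].
  destruct (exc_fin B A MB MA HBn HB HAn HA) as [e2 [He2 _]].
  unfold hausdorff. rewrite He1, He2. simpl.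
  generalize (Rmax_l e1 e2). intros Hm.
  destruct (dts_fin x B MA MB (HA x Ax) HBn HB) as [d [Hd [_ Happ]]].
  specialize (P1 x d Ax Hd).
  apply Rle_ge. apply Rle_trans with d; [|lra].
  apply Rnot_lt_le. intros Hlt.
  destruct (Happ (c - d) ltac:(lra)) as [b [r [Bb [Hr Hrl]]]].
  destruct (Hf b Bb) as [k Hk]. generalize (dist_ge' x b k r Hr). lra.
Qed.

Lemma im_gap a b : Cmod (Cminus a b) >= snd a - snd b.
Proof. generalize (snd_le_Cmod (Cminus a b)). rewrite snd_minus. intros H.
  generalize (Rle_abs (snd a - snd b)). lra. Qed.

Lemma im_gap' a b : Cmod (Cminus a b) >= snd b - snd a.
Proof. generalize (snd_le_Cmod (Cminus a b)). rewrite snd_minus. intros H.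
  generalize (Rabs_maj2 (snd a - snd b)). lra. Qed.

Lemma claim3 A : (forall t, 0 <= t < 1 -> is_attractor t (A t)) ->
  forall s, 1/2 <= s < 1 -> exists t0, t0 < 1 /\
    forall t, t0 <= t < 1 -> hausdorff (A t) (A s) >= 1/2.
Proof.
  intros HA s Hs. assert (Hs' : 0 <= s < 1) by lra.
  destruct (choose_k s Hs') as [k Hk].
  assert (HX : 1 <= INR (S k)) by (rewrite S_INR; generalize (pos_INR k); lra).
  assert (H7 : 0 < 1 / (7 * INR (S k)) <= 1/7).
  { split. apply Rdiv_lt_0_compat; lra.
    apply Rmult_le_reg_r with (7 * INR (S k)). lra.
    unfold Rdiv. rewrite Rmult_assoc, Rinv_l by lra. nra. }
  exists (1 - 1 / (7 * INR (S k))). split. lra.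
  intros t Ht. assert (Ht' : 0 <= t < 1) by lra.
  destruct (far_point (A t) k t (HA t Ht') Ht' ltac:(lra)) as [y [Ay Hy]].
  apply (far_haus (A t) (A s) 1 1 y).
  - exact (attr_ne _ _ (HA t Ht')).
  - exact (attr_bnd _ _ Ht' (HA t Ht')).
  - exact (attr_ne _ _ (HA s Hs')).
  - exact (attr_bnd _ _ Hs' (HA s Hs')).
  - exact Ay.
  - intros b Bb. exists k. generalize (attr_im s (A s) k Hs' (HA s Hs') b Bb). intros Hb.
    generalize (im_gap (y k) (b k)) (Rle_abs (snd (b k))). lra.
Qed.

Lemma claim1 A : (forall t, 0 <= t < 1 -> is_attractor t (A t)) ->
  forall tn : nat -> R, (forall n, 0 <= tn n < 1) -> is_lim_seq tn 1 ->
    ~ (exists B, nonempty_compact B /\ is_lim_seq (fun n => hausdorff (A (tn n)) B) 0).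
Proof.
  intros HA tn Htn Hlim [B [HB Hh]].
  destruct (compact_bnd B HB) as [MB HMB].
  assert (HBn : exists b, B b) by (destruct HB; auto).
  apply is_lim_seq_spec in Hh. destruct (Hh (mkposreal (1/8) ltac:(lra))) as [N HN]. simpl in HN.
  set (s := tn N). assert (Hs : 0 <= s < 1) by apply Htn.
  destruct (choose_k s Hs) as [k Hk].
  assert (HX : 1 <= INR (S k)) by (rewrite S_INR; generalize (pos_INR k); lra).
  assert (H7 : 0 < 1 / (7 * INR (S k))) by (apply Rdiv_lt_0_compat; lra).
  apply is_lim_seq_spec in Hlim. destruct (Hlim (mkposreal _ H7)) as [N2 HN2]. cbn [pos] in HN2.
  set (n := max N N2).
  assert (Hn1 : (N <= n)%nat) by apply Nat.le_max_l.
  assert (Hn2 : (N2 <= n)%nat) by apply Nat.le_max_r.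
  specialize (HN2 n Hn2). generalize (Rabs_maj2 (tn n - 1)). intros Hm.
  assert (Ht' := Htn n).
  destruct (far_point (A (tn n)) k (tn n) (HA _ Ht') Ht' ltac:(lra)) as [y [Ay Hy]].
  assert (Hh1 := HN n Hn1). rewrite Rminus_0_r in Hh1.
  generalize (Rle_abs (hausdorff (A (tn n)) B)). intros Ha1.
  destruct (close_point (A (tn n)) B 1 MB y (1/8) (attr_ne _ _ (HA _ Ht'))
     (attr_bnd _ _ Ht' (HA _ Ht')) HBn HMB Ay ltac:(lra)) as [b [Bb Hb]].
  assert (Hh2 := HN N (Nat.le_refl N)). rewrite Rminus_0_r in Hh2. fold s in Hh2.
  rewrite haus_sym in Hh2.
  generalize (Rle_abs (hausdorff B (A s))). intros Ha2.
  destruct (close_point B (A s) MB 1 b (1/8) HBn HMB (attr_ne _ _ (HA _ Hs))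
     (attr_bnd _ _ Hs (HA _ Hs)) Bb ltac:(lra)) as [a [Aa Hab]].
  generalize (attr_im s (A s) k Hs (HA s Hs) a Aa). intros Hai.
  specialize (Hb k). specialize (Hab k).
  generalize (im_gap (y k) (b k)) (im_gap (b k) (a k)) (Rle_abs (snd (a k))). lra.
Qed.

Theorem mainTheorem14 :
  forall A : R -> seqC -> Prop,
    (forall t, 0 <= t < 1 -> is_attractor t (A t)) ->
    (* no sequence t_n -> 1 in [0,1) along which A_{t_n} converges *)
    (forall tn : nat -> R,
        (forall n, 0 <= tn n < 1) -> is_lim_seq tn 1 ->
        ~ (exists B, nonempty_compact B /\
                     is_lim_seq (fun n => hausdorff (A (tn n)) B) 0))
    /\ (~ exists Ab, upper_transition_attractor A Ab)
    /\ (forall s, 1/2 <= s < 1 ->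
          exists t0, t0 < 1 /\
            forall t, t0 <= t < 1 -> hausdorff (A t) (A s) >= 1/2).
Proof.
  intros A HA. split; [|split].
  - apply claim1; auto.
  - intros [Ab [HAb [tn [H1 [_ [H3 H4]]]]]].
    apply (claim1 A HA tn H1 H3). exists Ab. auto.
  - apply claim3; auto.
Qed.
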